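(* Let $\sigma^2>0$, $\boldsymbol\beta\in\mathbb{R}^p$ not identically zero, $\delta_1^2,\dots,\delta_p^2>0$, and $\Sigma=\sigma^2\boldsymbol\beta\boldsymbol\beta^\top+\mathrm{diag}(\delta_1^2,\dots,\delta_p^2)$. Let $w$ be the long-only minimum variance portfolio (the minimizer of $w^\top\Sigma w$ subject to $\sum_i w_i=1$, $w_i\ge0$), let $K=\{i:w_i>0\}$, and set $$B_K=\frac{1}{\sigma^2}+\sum_{j\in K}\frac{\beta_j^2}{\delta_j^2},\qquad C_K=\sum_{j\in K}\frac{\beta_j}{\delta_j^2}.$$ Then for every $i\in\{1,\dots,p\}$: $i\in K$ if and only if $B_K>\beta_i C_K$. *)

(* Defs.v *)
From HB Require Import structures.
From mathcomp Require Import all_boot all_order all_algebra.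
Set Implicit Arguments. Unset Strict Implicit. Unset Printing Implicit Defensive.
Import Order.TTheory GRing.Theory Num.Theory.
Local Open Scope ring_scope.

(* One-factor covariance: Sigma = sigma2 * beta beta^T + diag(delta2).
   beta and delta2 are row vectors ('rV_p); delta2 i stands for delta_i^2. *)
Definition factor_cov (R : ringType) (p : nat) (sigma2 : R) (beta delta2 : 'rV[R]_p)
  : 'M[R]_p := sigma2 *: (beta^T *m beta) + diag_mx delta2.

Definition pvar (R : ringType) (p : nat) (Sigma : 'M[R]_p) (w : 'rV[R]_p) : R :=
  (w *m Sigma *m w^T) 0 0.

Definition long_only (R : numDomainType) (p : nat) (w : 'rV[R]_p) : Prop :=
  \sum_(i < p) w 0 i = 1 /\ forall i, 0 <= w 0 i.

Definition is_lo_mvp (R : numDomainType) (p : nat) (Sigma : 'M[R]_p) (w : 'rV[R]_p)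
  : Prop :=
  long_only w /\ forall v, long_only v -> pvar Sigma w <= pvar Sigma v.

Definition supp (R : numDomainType) (p : nat) (w : 'rV[R]_p) : {set 'I_p} :=
  [set i | 0 < w 0 i].

Definition B_K (R : fieldType) (p : nat) (sigma2 : R) (beta delta2 : 'rV[R]_p)
  (K : {set 'I_p}) : R :=
  sigma2^-1 + \sum_(j in K) beta 0 j ^+ 2 / delta2 0 j.

Definition C_K (R : fieldType) (p : nat) (beta delta2 : 'rV[R]_p)
  (K : {set 'I_p}) : R :=
  \sum_(j in K) beta 0 j / delta2 0 j.

(* Main.v *)
Require Import Defs.
From HB Require Import structures.
From mathcomp Require Import all_boot all_order all_algebra ring lra.
Import Order.TTheory GRing.Theory Num.Theory.
Local Open Scope ring_scope.

Lemma pvarE (R : realFieldType) (p : nat) (s : R) (beta d w : 'rV[R]_p) :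
  pvar (factor_cov s beta d) w =
  s * (\sum_k beta 0 k * w 0 k) ^+ 2 + \sum_k d 0 k * w 0 k ^+ 2.
Proof.
rewrite /pvar /factor_cov mulmxDr mulmxDl mxE; congr (_ + _).
  rewrite -scalemxAr -scalemxAl mxE; congr (_ * _).
  rewrite !mulmxA -(mulmxA _ beta) mxE big_ord1 !mxE.
  rewrite expr2; congr (_ * _); apply: eq_bigr => k _; rewrite !mxE; rewrite [w 0 k]/= mulrC; congr (_ * _); congr (w _ _); apply: val_inj; rewrite /= ?ord1 //.
rewrite mul_mx_diag mxE; apply: eq_bigr => k _; rewrite !mxE; ring.
Qed.

Lemma delta_sum (R : realFieldType) (p : nat) (F : 'I_p -> R) i j :
  \sum_k F k * ((k == j)%:R - (k == i)%:R) = F j - F i.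
Proof.
have H : forall l, \sum_k F k * (k == l)%:R = F l.
  move=> l; rewrite (bigD1 l) //= eqxx mulr1 big1 ?addr0 // => k /negbTE ->.
  by rewrite mulr0.
by rewrite -H -(H i) -sumrB; apply: eq_bigr => k _; rewrite mulrBr.
Qed.

Lemma perturb (R : realFieldType) (p : nat) (s : R) (beta d w : 'rV[R]_p) i j :
  0 < s -> (forall k, 0 < d 0 k) ->
  is_lo_mvp (factor_cov s beta d) w -> 0 < w 0 i ->
  s * beta 0 i * (\sum_k beta 0 k * w 0 k) + d 0 i * w 0 i <=
  s * beta 0 j * (\sum_k beta 0 k * w 0 k) + d 0 j * w 0 j.
Proof.
move=> s0 d0 [[w1 w0] wmin] wi.
have [<-|ij] := eqVneq i j; first by [].
set m := \sum_k beta 0 k * w 0 k.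
rewrite leNgt; apply/negP => lt.
set a := s * beta 0 j * m + d 0 j * w 0 j - (s * beta 0 i * m + d 0 i * w 0 i).
have a0 : a < 0 by rewrite /a subr_lt0.
set q := s * (beta 0 j - beta 0 i) ^+ 2 + d 0 j + d 0 i.
have q0 : 0 < q.
  have := d0 i; have := d0 j; have : 0 <= s * (beta 0 j - beta 0 i) ^+ 2.
    by rewrite mulr_ge0 ?sqr_ge0 ?ltW.
  rewrite /q; lra.
set t := Num.min (w 0 i) (- a / q).
have t0 : 0 < t by rewrite /t lt_min wi divr_gt0 // oppr_gt0.
have tw : t <= w 0 i by rewrite /t ge_min lexx.
have tq : t * q <= - a by rewrite -ler_pdivlMr // /t ge_min lexx orbT.
set h : 'rV[R]_p := \row_k ((k == j)%:R - (k == i)%:R).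
set v := w + t *: h.
have vE : forall k, v 0 k = w 0 k + t * ((k == j)%:R - (k == i)%:R).
  by move=> k; rewrite /v /h !mxE.
have lov : long_only v.
  split.
    under eq_bigr do rewrite vE.
    rewrite big_split /= w1 -mulr_sumr.
    under eq_bigr do rewrite -(mulr1 (_%:R - _)) mulrC.
    by rewrite delta_sum subrr mulr0 addr0.
  move=> k; rewrite vE.
  have := w0 k.
  have [->|kj] := eqVneq k j; first by rewrite eq_sym (negbTE ij) => ?; rewrite subr0 mulr1; lra.
  have [->|ki] := eqVneq k i; first by move=> ?; rewrite sub0r mulrN1; lra.
  by rewrite subrr mulr0 addr0.
have := wmin v lov.
rewrite !pvarE.
have mv : \sum_k beta 0 k * v 0 k = m + t * (beta 0 j - beta 0 i).
  under eq_bigr do rewrite vE mulrDr mulrCA.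
  by rewrite big_split /= -mulr_sumr delta_sum.
have dv : \sum_k d 0 k * v 0 k ^+ 2 = \sum_k d 0 k * w 0 k ^+ 2 +
   ((2 * t * d 0 j * w 0 j + t ^+ 2 * d 0 j) - (2 * t * d 0 i * w 0 i - t ^+ 2 * d 0 i)).
  transitivity (\sum_k d 0 k * w 0 k ^+ 2 + \sum_k (2 * t * d 0 k * w 0 k + t ^+ 2 * d 0 k * ((k == j)%:R - (k == i)%:R)) * ((k == j)%:R - (k == i)%:R)).
    by rewrite -big_split; apply: eq_bigr => k _ /=; rewrite vE; ring.
  rewrite delta_sum /= eqxx (negbTE ij) eq_sym (negbTE ij) eqxx; rewrite !mulr1n !mulr0n; ring.
rewrite mv dv.
have : t * (2 * a + t * q) < 0.
  by rewrite pmulr_rlt0 //; lra.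
move=> H1; rewrite -subr_ge0.
match goal with |- is_true (0 <= ?X) -> _ =>
  have -> : X = t * (2 * a + t * q) by rewrite /a /q /m; ring end.
lra.
Qed.

Theorem lemma1 (R : realFieldType) (p : nat) (sigma2 : R) (beta delta2 : 'rV[R]_p)
  (w : 'rV[R]_p) :
  0 < sigma2 ->
  beta != 0 ->
  (forall i, 0 < delta2 0 i) ->
  is_lo_mvp (factor_cov sigma2 beta delta2) w ->
  forall i : 'I_p,
    i \in supp w <->
    beta 0 i * C_K beta delta2 (supp w) < B_K sigma2 beta delta2 (supp w).
Proof.
move=> s0 _ d0 H i.
have P := fun i j wi => @perturb R p sigma2 beta delta2 w i j s0 d0 H wi.
case: H => [[w1 w0] _].
set s := sigma2 in s0 P *; set d := delta2 in d0 P *.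
set m := \sum_k beta 0 k * w 0 k in P *.
pose g k := s * beta 0 k * m + d 0 k * w 0 k.
have wz : forall k, ~~ (0 < w 0 k) -> w 0 k = 0.
  by move=> k; rewrite -leNgt => H; apply: le_anti; rewrite H w0.
have [k0 wk0] : exists k0, 0 < w 0 k0.
  case: (pickP (fun k => 0 < w 0 k)) => [k0 Hk|Hn]; first by exists k0.
  move: w1; rewrite big1 => [/eqP|k _]; first by rewrite eq_sym oner_eq0.
  by apply: wz; rewrite Hn.
pose mu := g k0.
have gK : forall k, 0 < w 0 k -> g k = mu.
  by move=> k wk; apply: le_anti; rewrite !P.
have gge : forall k, mu <= g k by move=> k; exact: P.
have mu0 : 0 < mu.
  have E1 : \sum_k w 0 k * g k = mu.
    rewrite -[RHS]mul1r -w1 mulr_suml; apply: eq_bigr => k _.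
    have [wk|wk] := boolP (0 < w 0 k); first by rewrite gK.
    by rewrite (wz k wk) !mul0r.
  have E2 : \sum_k w 0 k * g k = s * m ^+ 2 + \sum_k d 0 k * w 0 k ^+ 2.
    rewrite /g; under eq_bigr do rewrite mulrDr.
    rewrite big_split /=; congr (_ + _).
      transitivity (s * m * m); last by ring.
      have mdef : m = \sum_k beta 0 k * w 0 k by [].
      rewrite [X in _ = _ * X]mdef mulr_sumr; apply: eq_bigr => k _; ring.
    by apply: eq_bigr => k _; ring.
  have E3 : d 0 k0 * w 0 k0 ^+ 2 <= \sum_k d 0 k * w 0 k ^+ 2.
    rewrite (bigD1 k0) //= lerDl sumr_ge0 // => k _.
    by rewrite mulr_ge0 ?sqr_ge0 ?ltW.
  have E4 : 0 < d 0 k0 * w 0 k0 ^+ 2 by rewrite mulr_gt0 ?exprn_gt0.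
  have E5 : 0 <= s * m ^+ 2 by rewrite mulr_ge0 ?sqr_ge0 ?ltW.
  rewrite -E1 E2; lra.
set K := supp w.
set B := B_K s beta d K.
set C := C_K beta d K.
set B' := \sum_(j in K) beta 0 j ^+ 2 / d 0 j.
have BE : B = s^-1 + B' by [].
have B'0 : 0 <= B'.
  by apply: sumr_ge0 => k _; rewrite divr_ge0 ?sqr_ge0 ?ltW.
have B0 : 0 < B by rewrite BE; have := invr_gt0 s; rewrite s0; lra.
have mE : m = mu * C - s * m * B'.
  rewrite {1}/m /C /C_K /B' mulr_sumr mulr_sumr -sumrB.
  rewrite [LHS](bigID (fun k => k \in K)) /= [X in _ + X]big1 ?addr0.
    apply: eq_bigr => k; rewrite inE => Hk.
    have dk : d 0 k != 0 by rewrite gt_eqF.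
    have -> : w 0 k = (mu - s * beta 0 k * m) / d 0 k.
      by rewrite -(gK k Hk) /g; field.
    by field.
  by move=> k; rewrite inE => Hk; rewrite wz // mulr0.
have key : s * B * (mu - s * beta 0 i * m) = mu * s * (B - beta 0 i * C).
  have -> : s * B * (mu - s * beta 0 i * m) = s * B * mu - s * beta 0 i * (m * (s * B)) by ring.
  have -> : m * (s * B) = mu * C.
    have -> : m * (s * B) = m + s * m * B' by rewrite BE; field; rewrite gt_eqF.
    by rewrite {1}mE; ring.
  ring.
have iff1 : (i \in K) = (0 < mu - s * beta 0 i * m).
  rewrite inE; apply/idP/idP => Hi.
    have := gK i Hi; rewrite /g => <-.
    by rewrite addrC addKr mulr_gt0.
  have [//|Hn] := boolP (0 < w 0 i).
  have := gge i; rewrite /g (wz i Hn) mulr0 addr0; lra.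
have sB0 : 0 < s * B by rewrite mulr_gt0.
have ms0 : 0 < mu * s by rewrite mulr_gt0.
rewrite iff1 -(pmulr_rgt0 _ sB0) key pmulr_rgt0 // subr_gt0.
by split.
Qed.
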